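(* Let $m\in\mathbb{Z}_{>0}\cup\{\infty\}$, $n\ge1$, let $\tilde W$ be the subalgebra of $H(m,1,n)$ generated by $\tau,\tau^{-1},\sigma_1,\dots,\sigma_{n-2}$, and let $\epsilon=\pm1$. For $j\in\{0,\dots,n-1\}$, $\alpha\in\mathfrak{E}_m$ and $w\in\tilde W$, the element $\sigma_j^{\epsilon}\sigma_{j-1}^{\epsilon}\cdots\sigma_1^{\epsilon}\tau^{\alpha}\sigma_1\sigma_2\cdots\sigma_{n-1}w$ equals $\sigma_j^{-\epsilon}\sigma_{j-1}^{-\epsilon}\cdots\sigma_1^{-\epsilon}\tau^{\alpha}\sigma_1\sigma_2\cdots\sigma_{n-1}w$ plus an $\mathcal{A}_m$-linear combination of elements $\sigma_k^{-\epsilon}\sigma_{k-1}^{-\epsilon}\cdots\sigma_1^{-\epsilon}\tau^{\alpha}\sigma_1\sigma_2\cdots\sigma_{n-1}w_k$ with $k<j$ and $w_k\in\tilde W$.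
   Context: $\mathcal{A}_m:=\mathbb{C}[q^{\pm1},v_1^{\pm1},\dots,v_m^{\pm1}]$ for finite $m$, $\mathcal{A}_\infty:=\mathbb{C}[q,q^{-1}]$; $\mathfrak{E}_m:=\{0,\dots,m-1\}$ for finite $m$, $\mathfrak{E}_\infty:=\mathbb{Z}$. $H(m,1,n)$ is the $\mathcal{A}_m$-algebra generated by $\tau,\tau^{-1},\sigma_1,\dots,\sigma_{n-1}$ subject to $\tau\tau^{-1}=\tau^{-1}\tau=1$, $\sigma_i\sigma_{i+1}\sigma_i=\sigma_{i+1}\sigma_i\sigma_{i+1}$, $\sigma_i\sigma_j=\sigma_j\sigma_i$ ($|i-j|>1$), $\tau\sigma_1\tau\sigma_1=\sigma_1\tau\sigma_1\tau$, $\tau\sigma_i=\sigma_i\tau$ ($i>1$), $\sigma_i^2=(q-q^{-1})\sigma_i+1$, and $(\tau-v_1)\cdots(\tau-v_m)=0$ if $m<\infty$. Empty products equal $1$. *)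

(* Defs.v *)
From HB Require Import structures.
From mathcomp Require Import all_boot all_order all_algebra.
Set Implicit Arguments. Unset Strict Implicit. Unset Printing Implicit Defensive.
Import Order.TTheory GRing.Theory Num.Theory.
Local Open Scope ring_scope.

(* m : option nat ;  Some k  = finite m = k,  None = m = infinity. *)
Definition mpos (m : option nat) : Prop :=
  match m with Some k => (0 < k)%N | None => True end.

Definition Eset (m : option nat) (a : int) : Prop :=
  match m with Some k => (0 <= a) /\ (a < k%:Z) | None => True end.

Section Hecke.
Variables (R : comNzRingType) (B : algType R).

(* Defining relations of H(m,1,n) for elements tau, taui (= tau^-1),
   sig i (= sigma_i, 1 <= i <= n-1) and sigi i (= sigma_i^-1),
   over the parameters q, qi (= q^-1), v_1..v_m. *)
Definition HeckeRel (m : option nat) (n : nat) (q qi : R) (v : nat -> R)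
    (tau taui : B) (sig sigi : nat -> B) : Prop :=
  q * qi = 1 /\
      (tau * taui = 1 /\ taui * tau = 1) /\
      (forall i, (1 <= i)%N -> (i.+2 <= n)%N ->
         sig i * sig i.+1 * sig i = sig i.+1 * sig i * sig i.+1) /\
      (forall i j, (1 <= i)%N -> (i < n)%N -> (1 <= j)%N -> (j < n)%N ->
         (i.+1 < j)%N \/ (j.+1 < i)%N -> sig i * sig j = sig j * sig i) /\
      ((2 <= n)%N -> tau * sig 1 * tau * sig 1 = sig 1 * tau * sig 1 * tau) /\
      (forall i, (1 < i)%N -> (i < n)%N -> tau * sig i = sig i * tau) /\
      (forall i, (1 <= i)%N -> (i < n)%N ->
         [/\ sig i * sig i = (q - qi) *: sig i + 1,
             sig i * sigi i = 1 & sigi i * sig i = 1]) /\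
    (match m with
       | Some k => (forall i, (1 <= i)%N -> (i <= k)%N -> exists u, v i * u = 1)
                   /\ \prod_(1 <= i < k.+1) (tau - (v i)%:A) = 0
       | None => True end).

Definition tpow (tau taui : B) (a : int) : B :=
  match a with Posz k => tau ^+ k | Negz k => taui ^+ k.+1 end.

(* sigma_i^eps, with eps = +1 encoded as true, eps = -1 as false *)
Definition spow (sig sigi : nat -> B) (e : bool) (i : nat) : B :=
  if e then sig i else sigi i.

Definition desc (sig sigi : nat -> B) (e : bool) (j : nat) : B :=
  \prod_(0 <= k < j) spow sig sigi e (j - k).

Definition asc (sig : nat -> B) (n : nat) : B :=
  \prod_(1 <= i < n) sig i.

Inductive Wt (n : nat) (tau taui : B) (sig : nat -> B) : B -> Prop :=
  | Wt_tau : Wt n tau taui sig tau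
  | Wt_taui : Wt n tau taui sig taui
  | Wt_sig i : (1 <= i)%N -> (i.+2 <= n)%N -> Wt n tau taui sig (sig i)
  | Wt_one : Wt n tau taui sig 1
  | Wt_add x y : Wt n tau taui sig x -> Wt n tau taui sig y -> Wt n tau taui sig (x + y)
  | Wt_scale (c : R) x : Wt n tau taui sig x -> Wt n tau taui sig (c *: x)
  | Wt_mul x y : Wt n tau taui sig x -> Wt n tau taui sig y -> Wt n tau taui sig (x * y).

End Hecke.

(* Main.v *)
Require Import Defs.
From HB Require Import structures.
From mathcomp Require Import all_boot all_order all_algebra.
From mathcomp Require Import zify.
Import Order.TTheory GRing.Theory Num.Theory.
Local Open Scope ring_scope.

Lemma comm_alg (R : comNzRingType) (B : algType R) (x : B) (c : R) :
  GRing.comm x (c *: 1).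
Proof. by rewrite /GRing.comm mulr_algl -scalerAr mulr1. Qed.

Lemma sigi_eq (R : comNzRingType) (B : algType R) (c : R) (s si : B) :
  s * s = c *: s + 1 -> si * s = 1 -> si = s - c *: 1.
Proof.
move=> h1 h2.
have -> : si = si * (s * s - c *: s) by rewrite h1 addrAC subrr add0r mulr1.
by rewrite mulrBr mulrA h2 mul1r -scalerAr h2.
Qed.

Lemma asc_shift (R : comNzRingType) (B : algType R) (n k : nat) (sig : nat -> B) :
  (forall i, (1 <= i)%N -> (i.+2 <= n)%N ->
         sig i * sig i.+1 * sig i = sig i.+1 * sig i * sig i.+1) ->
  (forall i j, (1 <= i)%N -> (i < n)%N -> (1 <= j)%N -> (j < n)%N ->
         (i.+1 < j)%N \/ (j.+1 < i)%N -> sig i * sig j = sig j * sig i) ->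
  (k.+3 <= n)%N ->
  sig k.+2 * asc sig n = asc sig n * sig k.+1.
Proof.
move=> Hb Hc Hk.
have E : asc sig n = (\prod_(1 <= l < k.+1) sig l) * (sig k.+1 * (sig k.+2 * \prod_(k.+3 <= l < n) sig l)).
  rewrite /asc (big_cat_nat (n := k.+1)) //=; last lia.
  congr (_ * _); rewrite big_ltn; last lia; rewrite big_ltn //; lia.
have C1 : GRing.comm (sig k.+2) (\prod_(1 <= l < k.+1) sig l).
  rewrite big_nat_cond; apply: commr_prod => l /andP[/andP[l1 l2] _].
  rewrite /GRing.comm; apply: Hc; try lia.
have C2 : GRing.comm (sig k.+1) (\prod_(k.+3 <= l < n) sig l).
  rewrite big_nat_cond; apply: commr_prod => l /andP[/andP[l1 l2] _].
  rewrite /GRing.comm; apply: Hc; try lia.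
rewrite E mulrA C1 -!mulrA; congr (_ * _).
rewrite !mulrA -Hb; try lia.
by rewrite -!mulrA C2.
Qed.
Lemma zid (V : zmodType) (a b c d e : V) :
  a + b + (c + d) = a + e + ((c - e) + (b + d)).
Proof.
rewrite [c - e]addrC -!addrA; congr (_ + _).
rewrite [e + _]addrA addrA addrN add0r [RHS]addrC -!addrA; congr (_ + _).
by rewrite addrC.
Qed.

Inductive Sp (R : comNzRingType) (B : algType R) (Y : nat -> B -> B) (W : B -> Prop) (j : nat) : B -> Prop :=
| Sp0 : Sp R B Y W j 0
| SpY k w : (k < j)%N -> W w -> Sp R B Y W j (Y k w)
| SpD x y : Sp R B Y W j x -> Sp R B Y W j y -> Sp R B Y W j (x + y)
| SpZ (c : R) x : Sp R B Y W j x -> Sp R B Y W j (c *: x).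
Arguments Sp {R B}.
Arguments Sp0 {R B Y W j}.
Arguments SpY {R B Y W j}.
Arguments SpD {R B Y W j}.
Arguments SpZ {R B Y W j}.

Lemma Sp_mono (R : comNzRingType) (B : algType R) Y W j (z : B) :
  Sp Y W j z -> Sp Y W j.+1 z.
Proof.
elim=> [|k w kj Ww|x y _ Hx _ Hy|c x _ Hx]; try by constructor.
by apply: SpY => //; lia.
Qed.

Lemma Sp_left (R : comNzRingType) (B : algType R) Y W j (x z : B) :
  (forall k w, (k < j)%N -> W w -> exists w', W w' /\ x * Y k w = Y k w') ->
  Sp Y W j z -> Sp Y W j (x * z).
Proof.
move=> H; elim=> [|k w kj Ww|y1 y2 _ H1 _ H2|c y _ Hy].
- rewrite mulr0; constructor.
- have [w' [Ww' ->]] := H k w kj Ww; exact: SpY.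
- rewrite mulrDr; exact: SpD.
- rewrite -scalerAr; exact: SpZ.
Qed.

Lemma Sp_list (R : comNzRingType) (B : algType R) Y W j (z : B) :
  Sp Y W j z -> exists s : seq (nat * R * B),
    (forall t, t \in s -> (t.1.1 < j)%N /\ W t.2) /\
    z = \sum_(t <- s) t.1.2 *: Y t.1.1 t.2.
Proof.
elim=> [|k w kj Ww|y1 y2 _ [s1 [H1 E1]] _ [s2 [H2 E2]]|c y _ [s [H E]]].
- by exists [::]; rewrite big_nil.
- exists [:: (k, 1, w)]; rewrite big_seq1 scale1r; split => // t.
  by rewrite inE => /eqP ->.
- exists (s1 ++ s2); rewrite big_cat /= E1 E2; split => // t.
  by rewrite mem_cat => /orP[/H1|/H2].
- exists [seq (t.1.1, c * t.1.2, t.2) | t <- s]; split.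
    by move=> t /mapP[t' /H Ht' ->].
  by rewrite big_map E scaler_sumr; apply: eq_bigr => t _ /=; rewrite scalerA.
Qed.

Lemma spow_eq (R : comNzRingType) (B : algType R) (n : nat) (q qi : R)
    (sig sigi : nat -> B) b i :
  (forall i, (1 <= i)%N -> (i < n)%N ->
         [/\ sig i * sig i = (q - qi) *: sig i + 1,
             sig i * sigi i = 1 & sigi i * sig i = 1]) ->
  (1 <= i)%N -> (i < n)%N ->
  spow sig sigi b i = sig i + (if b then 0 else - (q - qi)) *: 1.
Proof.
move=> H i1 i2; case: b; rewrite /spow.
  by rewrite scale0r addr0.
have [h1 _ h3] := H i i1 i2.
by rewrite (@sigi_eq _ _ (q - qi) _ _ h1 h3) scaleNr.
Qed.

Lemma tpow_comm (R : comNzRingType) (B : algType R) (tau taui x : B) a :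
  tau * taui = 1 -> taui * tau = 1 -> tau * x = x * tau ->
  GRing.comm x (tpow tau taui a).
Proof.
move=> h1 h2 h3; case: a => k /=; apply: commrX; rewrite /GRing.comm //.
have -> : taui * x = taui * x * (tau * taui) by rewrite h1 mulr1.
by rewrite mulrA -(mulrA taui) -h3 !mulrA h2 mul1r.
Qed.

Lemma desc_S (R : comNzRingType) (B : algType R) (sig sigi : nat -> B) b j :
  desc sig sigi b j.+1 = spow sig sigi b j.+1 * desc sig sigi b j.
Proof.
rewrite /desc big_nat_recl //.
Qed.

Theorem mainTheorem7 (R : comNzRingType) (B : algType R) (m : option nat) (n : nat)
    (q qi : R) (v : nat -> R) (tau taui : B) (sig sigi : nat -> B) :
  mpos m -> (1 <= n)%N -> HeckeRel m n q qi v tau taui sig sigi ->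
  forall (e : bool) (j : nat) (a : int) (w : B),
    (j < n)%N -> Eset m a -> Wt n tau taui sig w ->
    exists s : seq (nat * R * B),
      (forall t, t \in s -> (t.1.1 < j)%N /\ Wt n tau taui sig t.2) /\
      desc sig sigi e j * tpow tau taui a * asc sig n * w =
        desc sig sigi (~~ e) j * tpow tau taui a * asc sig n * w +
        \sum_(t <- s) t.1.2 *: (desc sig sigi (~~ e) t.1.1 * tpow tau taui a * asc sig n * t.2).
Proof.
move=> _ n1 [_ [[ht1 ht2] [Hb [Hc [_ [Ht [Hq _]]]]]]] e j a w jn _ Ww.
set Y := fun k w => desc sig sigi (~~ e) k * tpow tau taui a * asc sig n * w.
set W := Wt n tau taui sig.
suff [z [Hz ->]] : exists z, Sp Y W j z /\
    desc sig sigi e j * tpow tau taui a * asc sig n * w = Y j w + z.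
  by have [s [H1 ->]] := @Sp_list _ _ _ _ _ _ Hz; exists s.
elim: j jn => [|j IH] jn.
  exists 0; split; [exact: Sp0|].
  by rewrite addr0 /Y /desc !big_nil.
have [z [Hz E]] := IH (ltnW jn).
set d1 := (if e then 0 else - (q - qi)).
set d2 := (if ~~ e then 0 else - (q - qi)).
have S1 := @spow_eq R B n q qi sig sigi e j.+1 Hq isT jn.
have S2 := @spow_eq R B n q qi sig sigi (~~ e) j.+1 Hq isT jn.
exists ((d1 - d2) *: Y j w + (sig j.+1 * z + d1 *: z)); split.
  apply: SpD; first by apply: SpZ; apply: SpY.
  apply: SpD; last by apply: SpZ; apply: Sp_mono.
  apply: Sp_mono; apply: Sp_left Hz => k w' kj Ww'.
  destruct j as [|j]; first by [].
  exists (sig j.+1 * w'); split.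
    by apply: Wt_mul => //; apply: Wt_sig; lia.
  have CD : GRing.comm (sig j.+2) (desc sig sigi (~~ e) k).
    rewrite /desc big_nat_cond; apply: commr_prod => l /andP[/andP[_ l2] _].
    rewrite (@spow_eq R B n q qi sig sigi (~~ e) (k - l) Hq); try lia.
    apply: commrD; last exact: comm_alg.
    rewrite /GRing.comm; apply: Hc; lia.
  have CT : GRing.comm (sig j.+2) (tpow tau taui a).
    apply: tpow_comm => //; apply: Ht; lia.
  have CA := @asc_shift R B n j sig Hb Hc jn.
  rewrite /Y !mulrA CD -(mulrA _ (sig _)) CT mulrA -(mulrA _ (sig _)) CA !mulrA.
  done.
have -> : desc sig sigi e j.+1 * tpow tau taui a * asc sig n * w =
   spow sig sigi e j.+1 * (desc sig sigi e j * tpow tau taui a * asc sig n * w).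
  by rewrite desc_S !mulrA.
have -> : Y j.+1 w = spow sig sigi (~~ e) j.+1 * Y j w.
  by rewrite /Y desc_S !mulrA.
rewrite E S1 S2 -/d1 -/d2 !mulrDl !mulrDr !mulr_algl. rewrite scalerBl; exact: zid.
Qed.
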